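(* No axis rule (defined for profiles over every finite candidate set) satisfies both heredity and consistency with linearity.
   Context: Candidates come from a fixed infinite universe. An approval ballot is a nonempty subset $A\subseteq C$; a profile over $C$ is a finite sequence of ballots. An axis is a strict linear order $\triangleleft$ on $C$. A ballot $A$ is an interval of $\triangleleft$ if for all $a,b\in A$ and every $c$ with $a\triangleleft c\triangleleft b$ we have $c\in A$. A profile is linear if some axis makes all its ballots intervals; $\mathrm{con}(P)$ is the set of such axes. An axis rule maps each profile $P$ over $C$ to a nonempty set $f(P)$ of axes on $C$ closed under reversal. It is consistent with linearity if $f(P)=\mathrm{con}(P)$ for every linear profile $P$. For $C'\subseteq C$, $P_{C'}$ is the profile over $C'$ obtained by intersecting each ballot with $C'$ (ballots becoming empty are discarded), and $\triangleleft_{C'}$ is the restriction of $\triangleleft$ to $C'$. $f$ satisfies heredity if for every profile $P$ over $C$, every $C'\subseteq C$ and every $\triangleleft\in f(P)$, we have $\triangleleft_{C'}\in f(P_{C'})$. *)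

(* Defs.v *)
(* Universe of candidates: nat (a fixed infinite universe).
   An axis on C (strict linear order on C) is represented by the sequence
   listing C from left to right: uniq s, with the same elements as C;
   a <| b iff a occurs before b in s. *)
From mathcomp Require Import all_boot all_order.
From mathcomp Require Import finmap.
Set Implicit Arguments.
Unset Strict Implicit.
Unset Printing Implicit Defensive.
Local Open Scope fset_scope.

Definition is_ballot (C A : {fset nat}) : Prop := A != fset0 /\ A `<=` C.

Definition is_profile (C : {fset nat}) (P : seq {fset nat}) : Prop :=
  forall A, A \in P -> is_ballot C A.

Definition is_axis (C : {fset nat}) (s : seq nat) : Prop :=
  uniq s /\ (forall x, x \in s <-> x \in C).

Definition axis_lt (s : seq nat) (a b : nat) : Prop :=
  a \in s /\ b \in s /\ (index a s < index b s)%N.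

Definition is_interval (s : seq nat) (A : {fset nat}) : Prop :=
  forall a b c, a \in A -> b \in A -> c \in s ->
    axis_lt s a c -> axis_lt s c b -> c \in A.

Definition con (C : {fset nat}) (P : seq {fset nat}) (s : seq nat) : Prop :=
  is_axis C s /\ (forall A, A \in P -> is_interval s A).

Definition linear_profile (C : {fset nat}) (P : seq {fset nat}) : Prop :=
  exists s, con C P s.

Definition restrict_profile (C' : {fset nat}) (P : seq {fset nat}) : seq {fset nat} :=
  [seq A `&` C' | A <- P & A `&` C' != fset0].

Definition restrict_axis (C' : {fset nat}) (s : seq nat) : seq nat :=
  [seq x <- s | x \in C'].

Definition axis_rule_type := {fset nat} -> seq {fset nat} -> seq nat -> Prop.

Definition is_axis_rule (f : axis_rule_type) : Prop :=
  forall C P, is_profile C P ->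
    (exists s, f C P s) /\
    (forall s, f C P s -> is_axis C s) /\
    (forall s, f C P s -> f C P (rev s)).

Definition consistent_with_linearity (f : axis_rule_type) : Prop :=
  forall C P, is_profile C P -> linear_profile C P ->
    forall s, f C P s <-> con C P s.

Definition heredity (f : axis_rule_type) : Prop :=
  forall C P, is_profile C P ->
    forall C', C' `<=` C ->
      forall s, f C P s -> f C' (restrict_profile C' P) (restrict_axis C' s).

(* Main.v *)
Require Import Defs.
From mathcomp Require Import all_boot all_order.
From mathcomp Require Import finmap.
Local Open Scope fset_scope.
Set Implicit Arguments.
Unset Strict Implicit.

Definition is_interval_b (s : seq nat) (A : {fset nat}) : bool :=
  all (fun a => all (fun b => all (fun c => (a \in A) ==> (b \in A) ==>
    (index a s < index c s)%N ==> (index c s < index b s)%N ==> (c \in A)) s) s) s.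

Lemma intervalP s A : is_interval s A <-> is_interval_b s A.
Proof.
split.
- move=> H; apply/allP=> a Has; apply/allP=> b Hbs; apply/allP=> c Hcs.
  apply/implyP=> Ha; apply/implyP=> Hb; apply/implyP=> H1; apply/implyP=> H2.
  exact: (H a b c Ha Hb Hcs (conj Has (conj Hcs H1)) (conj Hcs (conj Hbs H2))).
- move=> H a b c Ha Hb Hc [Has [_ H1]] [_ [Hbs H2]].
  move/allP: H => /(_ a Has)/allP/(_ b Hbs)/allP/(_ c Hc).
  by rewrite Ha Hb H1 H2.
Qed.

Definition is_interval_s (s : seq nat) (l : seq nat) : bool :=
  all (fun a => all (fun b => all (fun c => (a \in l) ==> (b \in l) ==>
    (index a s < index c s)%N ==> (index c s < index b s)%N ==> (c \in l)) s) s) s.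

Lemma ib_eq s A (l : seq nat) : (forall x, (x \in A) = (x \in l)) ->
  is_interval_b s A = is_interval_s s l.
Proof.
move=> H; apply: eq_all => a; apply: eq_all => b; apply: eq_all => c.
by rewrite !H.
Qed.

Lemma ra_eq (T : {fset nat}) (l : seq nat) s : (forall x, (x \in T) = (x \in l)) ->
  restrict_axis T s = [seq x <- s | x \in l].
Proof. by move=> H; apply: eq_filter => x; rewrite /= H. Qed.

Ltac meq := let x := fresh in move=> x; rewrite !inE; by case: x => [|[|[|[|[|x]]]]].

Lemma lin_of C' P w : is_axis C' w ->
  (forall B, B \in P -> is_interval_b w (B `&` C')) ->
  linear_profile C' (restrict_profile C' P).
Proof.
move=> Hw H; exists w; split => // A /mapP[B]; rewrite mem_filter.
move=> /andP[_ HB] ->; apply/intervalP; exact: H.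
Qed.

Lemma con_use C' P t B : con C' (restrict_profile C' P) t -> B \in P ->
  B `&` C' != fset0 -> is_interval_b t (B `&` C').
Proof.
move=> [_ H] HB Hne; apply/intervalP; apply: H; apply/mapP; exists B => //.
by rewrite mem_filter Hne HB.
Qed.

Lemma prof_restr C C' P : is_profile C P -> C' `<=` C ->
  is_profile C' (restrict_profile C' P).
Proof.
move=> _ _ A /mapP[B]; rewrite mem_filter => /andP[Hne _] ->; split => //.
exact: fsubsetIr.
Qed.

Local Notation CC := ([fset 1; 2; 3; 4] : {fset nat}).
Local Notation PP := ([:: [fset 1; 2]; [fset 2; 3]; [fset 3; 4]; [fset 4; 1]] : seq {fset nat}).
Local Notation T1 := ([fset 1; 2; 3] : {fset nat}).
Local Notation T2 := ([fset 2; 3; 4] : {fset nat}).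
Local Notation T3 := ([fset 3; 4; 1] : {fset nat}).
Local Notation T4 := ([fset 4; 1; 2] : {fset nat}).

Ltac dsj := let H := fresh in move=> H; repeat (case/orP: H => H); move/eqP: H => ->.
Ltac ne := apply/fset0Pn; first [exists 1; by rewrite !inE | exists 2; by rewrite !inE | exists 3; by rewrite !inE | exists 4; by rewrite !inE].
Ltac inP := repeat (first [apply: mem_head | apply: mem_behead]).

Lemma HPP : is_profile CC PP.
Proof.
move=> A; rewrite !inE; dsj; split;
  try ne;
  apply/fsubsetP => x; rewrite !inE;
  by dsj.
Qed.

Lemma subT1 : T1 `<=` CC.
Proof. by apply/fsubsetP => x; rewrite !inE; dsj. Qed.
Lemma subT2 : T2 `<=` CC.
Proof. by apply/fsubsetP => x; rewrite !inE; dsj. Qed.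
Lemma subT3 : T3 `<=` CC.
Proof. by apply/fsubsetP => x; rewrite !inE; dsj. Qed.
Lemma subT4 : T4 `<=` CC.
Proof. by apply/fsubsetP => x; rewrite !inE; dsj. Qed.

Lemma axT (T : {fset nat}) w : uniq w -> (forall x, (x \in w) = (x \in T)) -> is_axis T w.
Proof. by move=> Hu Hm; split => // x; rewrite Hm. Qed.

Ltac intv := move=> B; rewrite !inE; dsj; by rewrite /is_interval_b /= !inE.

Lemma lin1 : linear_profile T1 (restrict_profile T1 PP).
Proof. apply: (@lin_of _ _ [:: 1; 2; 3]); first by apply: axT => // x; rewrite !inE; apply/idP/idP; dsj. intv. Qed.
Lemma lin2 : linear_profile T2 (restrict_profile T2 PP).
Proof. apply: (@lin_of _ _ [:: 2; 3; 4]); first by apply: axT => // x; rewrite !inE; apply/idP/idP; dsj. intv. Qed.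
Lemma lin3 : linear_profile T3 (restrict_profile T3 PP).
Proof. apply: (@lin_of _ _ [:: 3; 4; 1]); first by apply: axT => // x; rewrite !inE; apply/idP/idP; dsj. intv. Qed.
Lemma lin4 : linear_profile T4 (restrict_profile T4 PP).
Proof. apply: (@lin_of _ _ [:: 4; 1; 2]); first by apply: axT => // x; rewrite !inE; apply/idP/idP; dsj. intv. Qed.


Theorem mainTheorem18 :
  ~ (exists f : axis_rule_type,
       is_axis_rule f /\ heredity f /\ consistent_with_linearity f).
Proof.
move=> [f [Hr [Hh Hc]]].
have [[s Hs] [Hax _]] := Hr CC PP HPP.
have [Hu Hm] := Hax s Hs.
have getc : forall T, T `<=` CC -> linear_profile T (restrict_profile T PP) ->
    con T (restrict_profile T PP) (restrict_axis T s).
  move=> T HT Hl.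
  have HPT := prof_restr HPP HT.
  apply: (proj1 (Hc _ _ HPT Hl _)).
  exact: (Hh CC PP HPP T HT s Hs).
have C1 := getc _ subT1 lin1.
have C2 := getc _ subT2 lin2.
have C3 := getc _ subT3 lin3.
have C4 := getc _ subT4 lin4.
have h0 : is_interval_b (restrict_axis T1 s) ([fset 1; 2] `&` T1) := con_use (B:=[fset 1; 2]) C1 (ltac:(inP)) (ltac:(ne)).
have h1 : is_interval_b (restrict_axis T1 s) ([fset 2; 3] `&` T1) := con_use (B:=[fset 2; 3]) C1 (ltac:(inP)) (ltac:(ne)).
have h2 : is_interval_b (restrict_axis T2 s) ([fset 2; 3] `&` T2) := con_use (B:=[fset 2; 3]) C2 (ltac:(inP)) (ltac:(ne)).
have h3 : is_interval_b (restrict_axis T2 s) ([fset 3; 4] `&` T2) := con_use (B:=[fset 3; 4]) C2 (ltac:(inP)) (ltac:(ne)).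
have h4 : is_interval_b (restrict_axis T3 s) ([fset 3; 4] `&` T3) := con_use (B:=[fset 3; 4]) C3 (ltac:(inP)) (ltac:(ne)).
have h5 : is_interval_b (restrict_axis T3 s) ([fset 4; 1] `&` T3) := con_use (B:=[fset 4; 1]) C3 (ltac:(inP)) (ltac:(ne)).
have h6 : is_interval_b (restrict_axis T4 s) ([fset 4; 1] `&` T4) := con_use (B:=[fset 4; 1]) C4 (ltac:(inP)) (ltac:(ne)).
have h7 : is_interval_b (restrict_axis T4 s) ([fset 1; 2] `&` T4) := con_use (B:=[fset 1; 2]) C4 (ltac:(inP)) (ltac:(ne)).
have g0 : is_interval_s [seq x <- s | x \in [:: 1; 2; 3]] [:: 1; 2].
  move: h0; rewrite (@ra_eq T1 [:: 1; 2; 3] s ltac:(meq)) (@ib_eq _ ([fset 1; 2] `&` T1) [:: 1; 2] ltac:(meq)); exact: id.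
have g1 : is_interval_s [seq x <- s | x \in [:: 1; 2; 3]] [:: 2; 3].
  move: h1; rewrite (@ra_eq T1 [:: 1; 2; 3] s ltac:(meq)) (@ib_eq _ ([fset 2; 3] `&` T1) [:: 2; 3] ltac:(meq)); exact: id.
have g2 : is_interval_s [seq x <- s | x \in [:: 2; 3; 4]] [:: 2; 3].
  move: h2; rewrite (@ra_eq T2 [:: 2; 3; 4] s ltac:(meq)) (@ib_eq _ ([fset 2; 3] `&` T2) [:: 2; 3] ltac:(meq)); exact: id.
have g3 : is_interval_s [seq x <- s | x \in [:: 2; 3; 4]] [:: 3; 4].
  move: h3; rewrite (@ra_eq T2 [:: 2; 3; 4] s ltac:(meq)) (@ib_eq _ ([fset 3; 4] `&` T2) [:: 3; 4] ltac:(meq)); exact: id.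
have g4 : is_interval_s [seq x <- s | x \in [:: 3; 4; 1]] [:: 3; 4].
  move: h4; rewrite (@ra_eq T3 [:: 3; 4; 1] s ltac:(meq)) (@ib_eq _ ([fset 3; 4] `&` T3) [:: 3; 4] ltac:(meq)); exact: id.
have g5 : is_interval_s [seq x <- s | x \in [:: 3; 4; 1]] [:: 4; 1].
  move: h5; rewrite (@ra_eq T3 [:: 3; 4; 1] s ltac:(meq)) (@ib_eq _ ([fset 4; 1] `&` T3) [:: 4; 1] ltac:(meq)); exact: id.
have g6 : is_interval_s [seq x <- s | x \in [:: 4; 1; 2]] [:: 4; 1].
  move: h6; rewrite (@ra_eq T4 [:: 4; 1; 2] s ltac:(meq)) (@ib_eq _ ([fset 4; 1] `&` T4) [:: 4; 1] ltac:(meq)); exact: id.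
have g7 : is_interval_s [seq x <- s | x \in [:: 4; 1; 2]] [:: 1; 2].
  move: h7; rewrite (@ra_eq T4 [:: 4; 1; 2] s ltac:(meq)) (@ib_eq _ ([fset 1; 2] `&` T4) [:: 1; 2] ltac:(meq)); exact: id.
have Hall : is_interval_s [seq x <- s | x \in [:: 1; 2; 3]] [:: 1; 2] && is_interval_s [seq x <- s | x \in [:: 1; 2; 3]] [:: 2; 3] && is_interval_s [seq x <- s | x \in [:: 2; 3; 4]] [:: 2; 3] && is_interval_s [seq x <- s | x \in [:: 2; 3; 4]] [:: 3; 4] && is_interval_s [seq x <- s | x \in [:: 3; 4; 1]] [:: 3; 4] && is_interval_s [seq x <- s | x \in [:: 3; 4; 1]] [:: 4; 1] && is_interval_s [seq x <- s | x \in [:: 4; 1; 2]] [:: 4; 1] && is_interval_s [seq x <- s | x \in [:: 4; 1; 2]] [:: 1; 2] by rewrite g0 g1 g2 g3 g4 g5 g6 g7.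
clear h0 h1 h2 h3 h4 h5 h6 h7 g0 g1 g2 g3 g4 g5 g6 g7 C1 C2 C3 C4 getc.
have Hm' : forall x, x \in s -> x \in [:: 1; 2; 3; 4].
  by move=> x /Hm; rewrite !inE; dsj.
have Hsz : size s = 4.
  have -> : 4 = size [:: 1; 2; 3; 4] by [].
  apply: perm_size; apply: uniq_perm => // x.
  apply/idP/idP; first exact: Hm'.
  by move=> H; apply/Hm; move: H; rewrite !inE; dsj.
clear -Hu Hm' Hsz Hall.
case: s Hu Hm' Hsz Hall => [|a [|b [|c [|d [|e s]]]]] // Hu Hm' _ Hall.
have Ha : a \in [:: 1; 2; 3; 4] by apply: Hm'; rewrite !inE ?eqxx ?orbT.
have Hb : b \in [:: 1; 2; 3; 4] by apply: Hm'; rewrite !inE ?eqxx ?orbT.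
have Hc : c \in [:: 1; 2; 3; 4] by apply: Hm'; rewrite !inE ?eqxx ?orbT.
have Hd : d \in [:: 1; 2; 3; 4] by apply: Hm'; rewrite !inE ?eqxx ?orbT.
move: Ha Hb Hc Hd; rewrite !inE.
do 4 (let H := fresh in move=> H; repeat (case/orP: H => H); move/eqP: H => H; subst);
  by move: Hu Hall; rewrite /is_interval_s /= => *.
Qed.
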